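(* Let $f\in C^1[0,1]$ with $f(0)=0$, $h:=f'$; let $D\in C^1[0,1]$ with $D>0$ on $(0,1)$, $D(1)=0$; let $g\in C[0,1]$ with $g>0$ on $(0,1]$, $g(0)=0$; assume $\limsup_{\varphi\to0^+}D(\varphi)g(\varphi)/\varphi<+\infty$. Set $q:=Dg$, let $c\ge c^*$ and let $z$ be the solution of $(P_c)$ with $z(1)=0$. Then $$\lim_{\varphi\to1^-}\frac{D(\varphi)}{z(\varphi)}=\begin{cases}\dfrac{h(1)-c-\sqrt{(h(1)-c)^2-4D'(1)g(1)}}{2g(1)} & \text{if } D'(1)<0,\\[2mm] \min\Big\{0,\dfrac{h(1)-c}{g(1)}\Big\} & \text{if } D'(1)=0.\end{cases}$$
   Context: For $c\in\mathbb R$, a solution of problem $(P_c)$ (with $q=Dg$) is a function $z\in C[0,1]\cap C^1(0,1)$ with $\dot z(\varphi)=h(\varphi)-c-q(\varphi)/z(\varphi)$ and $z(\varphi)<0$ for all $\varphi\in(0,1)$, and $z(0)=0$. $c^*$ denotes the real number such that $(P_c)$ has a solution with $z(1)=0$ iff $c\ge c^*$, this solution then being unique. *)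

(* Defs.v *)
From Stdlib Require Import Reals.
From Coquelicot Require Import Coquelicot.
Open Scope R_scope.

Definition I01 (x : R) : Prop := 0 <= x <= 1.

Definition cont01 (f : R -> R) : Prop :=
  forall x, I01 x -> filterlim f (within I01 (locally x)) (locally (f x)).

Definition has_deriv01 (f df : R -> R) : Prop :=
  forall x, I01 x ->
    filterlim (fun y => (f y - f x) / (y - x))
      (within (fun y => I01 y /\ y <> x) (locally x)) (locally (df x)).

Definition C1_01 (f df : R -> R) : Prop := has_deriv01 f df /\ cont01 df.

Definition solves_Pc (h D g : R -> R) (c : R) (z : R -> R) : Prop :=
  cont01 z /\
  (forall x, 0 < x < 1 -> is_derive z x (h x - c - (D x * g x) / z x)) /\
  (forall x, 0 < x < 1 -> z x < 0) /\
  z 0 = 0.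

(* Main.v *)
Require Import Defs.
From Stdlib Require Import Reals Lra Psatz.
From Coquelicot Require Import Coquelicot.
Open Scope R_scope.

Lemma eps_within (F : R->R) (P : R -> Prop) x l :
  filterlim F (within P (locally x)) (locally l) ->
  forall eta, eta > 0 -> exists d, d > 0 /\
    forall y, Rabs (y - x) < d -> P y -> Rabs (F y - l) < eta.
Proof.
  intros H eta He.
  destruct (proj1 (filterlim_locally _ _) H (mkposreal eta He)) as [d Hd].
  exists d. split. apply cond_pos. intros y Hy Py. apply (Hd y Hy Py).
Qed.

Lemma cont_at1 (F : R -> R) : cont01 F ->
  forall eta, eta > 0 -> exists d, 0 < d <= 1 /\
    forall x, 1 - d < x < 1 -> Rabs (F x - F 1) < eta.
Proof.
  intros HF eta He.
  assert (I1 : I01 1) by (unfold I01; lra).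
  destruct (eps_within _ _ _ _ (HF 1 I1) eta He) as [d [Hd H]].
  exists (Rmin d 1). split. split. apply Rmin_glb_lt; lra. apply Rmin_r.
  intros x Hx. apply H.
  - assert (Rmin d 1 <= d) by apply Rmin_l. rewrite Rabs_left; lra.
  - assert (Rmin d 1 <= 1) by apply Rmin_r. unfold I01; lra.
Qed.

Definition clamp (a t : R) := Rmax a (Rmin t 1).

Lemma clamp_lip a t s : a <= 1 -> Rabs (clamp a t - clamp a s) <= Rabs (t - s).
Proof.
  intros Ha. unfold clamp, Rmax, Rmin.
  repeat destruct Rle_dec; unfold Rabs; repeat destruct Rcase_abs; lra.
Qed.

Lemma clamp_in a t : 0 <= a <= 1 -> I01 (clamp a t) /\ a <= clamp a t <= 1.
Proof.
  intros Ha. unfold clamp, Rmax, Rmin, I01.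
  repeat destruct Rle_dec; lra.
Qed.

Lemma clamp_id a t : a <= t <= 1 -> clamp a t = t.
Proof.
  intros Ha. unfold clamp, Rmax, Rmin.
  repeat destruct Rle_dec; lra.
Qed.

Lemma max_exists (F : R -> R) a : cont01 F -> 0 <= a <= 1 ->
  exists m, a <= m <= 1 /\ forall c, a <= c <= 1 -> F c <= F m.
Proof.
  intros HF Ha.
  set (G := fun t => F (clamp a t)).
  assert (CG : forall c, continuity_pt G c).
  { intros c. apply continuity_pt_filterlim.
    apply filterlim_locally. intros eps.
    destruct (clamp_in a c Ha) as [Ic _].
    destruct (eps_within _ _ _ _ (HF _ Ic) eps (cond_pos eps)) as [d [Hd H]].
    exists (mkposreal d Hd). intros y Hy.
    change (Rabs (G y - G c) < eps). unfold G.
    apply H. 2: apply (clamp_in a y Ha).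
    eapply Rle_lt_trans. apply clamp_lip; lra. exact Hy. }
  destruct (continuity_ab_maj G a 1 (proj2 Ha) (fun c _ => CG c)) as [m [Hm Hm2]].
  exists m. split. exact Hm2.
  intros c Hc. specialize (Hm c Hc). unfold G in Hm.
  rewrite (clamp_id a c Hc), (clamp_id a m Hm2) in Hm. exact Hm.
Qed.
Lemma local_inc (D dD z : R -> R) x dz al be :
  0 < x < 1 -> has_deriv01 D dD -> is_derive z x dz ->
  al * dD x + be * dz > 0 ->
  exists y, x < y <= 1 /\ al * D y + be * z y > al * D x + be * z x.
Proof.
  intros Hx HD Hz Hq.
  set (q := al * dD x + be * dz) in *.
  assert (Ix : I01 x) by (unfold I01; lra).
  assert (e1p : q / (2 * (Rabs al + 1)) > 0).
  { apply Rdiv_lt_0_compat. lra. pose proof (Rabs_pos al); lra. }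
  assert (e2p : q / (2 * (Rabs be + 1)) > 0).
  { apply Rdiv_lt_0_compat. lra. pose proof (Rabs_pos be); lra. }
  destruct (eps_within _ _ _ _ (HD x Ix) _ e1p) as [d1 [Hd1 H1]].
  apply is_derive_Reals in Hz.
  destruct (Hz _ e2p) as [d2 H2].
  set (d := Rmin d1 d2).
  assert (dp : d > 0) by (apply Rmin_glb_lt; [lra | apply cond_pos]).
  set (hh := Rmin (d / 2) (1 - x)).
  assert (hp : 0 < hh) by (apply Rmin_glb_lt; lra).
  assert (hle : hh <= d / 2) by apply Rmin_l.
  assert (hle2 : hh <= 1 - x) by apply Rmin_r.
  assert (dle1 : d <= d1) by apply Rmin_l.
  assert (dle2 : d <= d2) by apply Rmin_r.
  exists (x + hh). split. lra.
  assert (A1 := H1 (x + hh)).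
  assert (A2 := H2 hh).
  replace (x + hh - x) with hh in A1 by ring.
  rewrite Rabs_right in A1 by lra.
  rewrite Rabs_right in A2 by lra.
  specialize (A1 ltac:(lra) ltac:(unfold I01; lra)).
  specialize (A2 ltac:(lra) ltac:(lra)).
  set (DQ := (D (x + hh) - D x) / hh) in *.
  set (ZQ := (z (x + hh) - z x) / hh) in *.
  apply Rabs_def2 in A1. apply Rabs_def2 in A2.
  assert (S : al * DQ + be * ZQ > 0).
  { assert (E1 : Rabs (al * (DQ - dD x)) + Rabs (be * (ZQ - dz)) < q).
    { rewrite !Rabs_mult.
      assert (Rabs al * Rabs (DQ - dD x) <= Rabs al * (q / (2 * (Rabs al + 1)))).
      { apply Rmult_le_compat_l. apply Rabs_pos. apply Rlt_le. apply Rabs_def1; lra. }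
      assert (Rabs be * Rabs (ZQ - dz) <= Rabs be * (q / (2 * (Rabs be + 1)))).
      { apply Rmult_le_compat_l. apply Rabs_pos. apply Rlt_le. apply Rabs_def1; lra. }
      assert (Rabs al * (q / (2 * (Rabs al + 1))) < q / 2).
      { pose proof (Rabs_pos al).
        apply (Rmult_lt_reg_r (2 * (Rabs al + 1))). lra.
        field_simplify; try lra. }
      assert (Rabs be * (q / (2 * (Rabs be + 1))) < q / 2).
      { pose proof (Rabs_pos be).
        apply (Rmult_lt_reg_r (2 * (Rabs be + 1))). lra.
        field_simplify; try lra. }
      lra. }
    pose proof (Rle_abs (- (al * (DQ - dD x)))).
    pose proof (Rle_abs (- (be * (ZQ - dz)))).
    rewrite Rabs_Ropp in *. unfold q in *. lra. }
  unfold DQ, ZQ in S.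
  assert (S2 : (al * (D (x + hh) - D x) + be * (z (x + hh) - z x)) / hh > 0).
  { replace ((al * (D (x + hh) - D x) + be * (z (x + hh) - z x)) / hh)
      with (al * ((D (x + hh) - D x) / hh) + be * ((z (x + hh) - z x) / hh))
      by (field; lra). exact S. }
  assert (S3 : al * (D (x + hh) - D x) + be * (z (x + hh) - z x) > 0).
  { apply Rlt_gt. replace (al * (D (x + hh) - D x) + be * (z (x + hh) - z x))
    with (((al * (D (x + hh) - D x) + be * (z (x + hh) - z x)) / hh) * hh)
    by (field; lra). apply Rmult_lt_0_compat; lra. }
  lra.
Qed.

Lemma deriv_cont (D dD : R -> R) : has_deriv01 D dD -> cont01 D.
Proof.
  intros H x Ix. apply filterlim_locally. intros eps.
  destruct (eps_within _ _ _ _ (H x Ix) 1 ltac:(lra)) as [d [Hd Hq]].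
  set (K := Rabs (dD x) + 1).
  assert (Kp : K > 0) by (unfold K; pose proof (Rabs_pos (dD x)); lra).
  assert (ep : eps / K > 0) by (apply Rdiv_lt_0_compat; [apply cond_pos | lra]).
  exists (mkposreal (Rmin d (eps / K)) (Rmin_glb_lt _ _ _ Hd ep)).
  intros y Hy Iy. change (Rabs (D y - D x) < eps).
  change (Rabs (y - x) < Rmin d (eps / K)) in Hy.
  assert (m1 : Rmin d (eps / K) <= d) by apply Rmin_l.
  assert (m2 : Rmin d (eps / K) <= eps / K) by apply Rmin_r.
  destruct (Req_dec y x) as [E|E].
  - subst y. rewrite Rminus_diag, Rabs_R0. apply cond_pos.
  - specialize (Hq y ltac:(lra) (conj Iy E)).
    set (q := (D y - D x) / (y - x)) in Hq.
    assert (Dq : D y - D x = q * (y - x)) by (unfold q; field; lra).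
    rewrite Dq, Rabs_mult.
    assert (Rabs q <= K).
    { unfold K. pose proof (Rabs_triang_inv q (dD x)). lra. }
    assert (Rabs q * Rabs (y - x) <= K * Rabs (y - x)).
    { apply Rmult_le_compat_r. apply Rabs_pos. lra. }
    assert (K * Rabs (y - x) < K * (eps / K)).
    { apply Rmult_lt_compat_l; lra. }
    replace (K * (eps / K)) with (pos eps) in * by (field; lra). lra.
Qed.

Lemma cont01_lin (D z : R -> R) al be : cont01 D -> cont01 z ->
  cont01 (fun x => al * D x + be * z x).
Proof.
  intros HD Hz x Ix.
  apply (filterlim_comp_2 (G := locally (al * D x)) (H := locally (be * z x)) (fun y => al * D y) (fun y => be * z y) Rplus).
  - apply filterlim_comp with (G := locally (D x)). apply HD, Ix.
    apply (filterlim_scal_r (K := R_AbsRing) (V := R_NormedModule) al (D x)).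
  - apply filterlim_comp with (G := locally (z x)). apply Hz, Ix.
    apply (filterlim_scal_r (K := R_AbsRing) (V := R_NormedModule) be (z x)).
  - apply (filterlim_plus (K := R_AbsRing) (V := R_NormedModule) (al * D x) (be * z x)).
Qed.

Lemma barrier (D dD z dz : R -> R) al be x1 :
  0 < x1 < 1 -> has_deriv01 D dD -> cont01 D -> cont01 z -> D 1 = 0 -> z 1 = 0 ->
  (forall x, x1 <= x < 1 -> is_derive z x (dz x)) ->
  (forall x, x1 <= x < 1 -> al * D x + be * z x >= 0 -> al * dD x + be * dz x > 0) ->
  al * D x1 + be * z x1 < 0.
Proof.
  intros Hx1 HdD HD Hz D1 z1 Hdz Hpos.
  destruct (Rlt_or_le (al * D x1 + be * z x1) 0) as [H|H]; [exact H|exfalso].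
  destruct (max_exists _ x1 (cont01_lin D z al be HD Hz) ltac:(lra)) as [m [Hm Hmax]].
  simpl in Hmax.
  assert (Key : forall x, x1 <= x < 1 -> al * D x + be * z x >= 0 ->
     (forall c, x1 <= c <= 1 -> al * D c + be * z c <= al * D x + be * z x) -> False).
  { intros x Hx Hnn Hmx.
    destruct (local_inc D dD z x (dz x) al be ltac:(lra) HdD (Hdz x Hx) (Hpos x Hx Hnn))
      as [y [Hy Hy2]].
    specialize (Hmx y ltac:(lra)). lra. }
  destruct (Req_dec m 1) as [E|E].
  - subst m. rewrite D1, z1 in Hmax.
    assert (Hx1m := Hmax x1 ltac:(lra)).
    apply (Key x1 ltac:(lra) ltac:(lra)). intros c Hc.
    specialize (Hmax c Hc). lra.
  - apply (Key m ltac:(lra)).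
    + specialize (Hmax x1 ltac:(lra)). lra.
    + exact Hmax.
Qed.

Definition Pp (h g dD : R -> R) (c x t : R) := g x * (t * t) - (h x - c) * t + dD x.

Lemma P_near1 (h g dD : R -> R) c lam : cont01 h -> cont01 g -> cont01 dD -> lam < 0 ->
  forall eta, eta > 0 -> exists d, 0 < d <= 1 /\
   forall x, 1 - d < x < 1 -> Rabs (Pp h g dD c x lam - Pp h g dD c 1 lam) < eta.
Proof.
  intros Hh Hg HdD Hl eta He.
  set (K := lam * lam - lam + 1).
  assert (Kp : K > 0) by (unfold K; nra).
  assert (ep : eta / (2 * K) > 0) by (apply Rdiv_lt_0_compat; lra).
  destruct (cont_at1 h Hh _ ep) as [d1 [Hd1 H1]].
  destruct (cont_at1 g Hg _ ep) as [d2 [Hd2 H2]].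
  destruct (cont_at1 dD HdD _ ep) as [d3 [Hd3 H3]].
  exists (Rmin d1 (Rmin d2 d3)).
  assert (m1 : Rmin d1 (Rmin d2 d3) <= d1) by apply Rmin_l.
  assert (m2 : Rmin d1 (Rmin d2 d3) <= Rmin d2 d3) by apply Rmin_r.
  assert (m3 : Rmin d2 d3 <= d2) by apply Rmin_l.
  assert (m4 : Rmin d2 d3 <= d3) by apply Rmin_r.
  split. split. apply Rmin_glb_lt; [lra| apply Rmin_glb_lt; lra]. lra.
  intros x Hx.
  specialize (H1 x ltac:(lra)). specialize (H2 x ltac:(lra)). specialize (H3 x ltac:(lra)).
  apply Rabs_def2 in H1. apply Rabs_def2 in H2. apply Rabs_def2 in H3.
  set (e := eta / (2 * K)) in *.
  assert (eK : e * K = eta / 2) by (unfold e; field; lra).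
  unfold Pp. apply Rabs_def1.
  - set (u := g x - g 1) in *. set (v := h x - h 1) in *. set (w := dD x - dD 1) in *.
    replace (g x * (lam * lam) - (h x - c) * lam + dD x -
      (g 1 * (lam * lam) - (h 1 - c) * lam + dD 1)) with (u * (lam*lam) - v * lam + w)
      by (unfold u, v, w; ring).
    unfold K in eK. nra.
  - set (u := g x - g 1) in *. set (v := h x - h 1) in *. set (w := dD x - dD 1) in *.
    replace (g x * (lam * lam) - (h x - c) * lam + dD x -
      (g 1 * (lam * lam) - (h 1 - c) * lam + dD 1)) with (u * (lam*lam) - v * lam + w)
      by (unfold u, v, w; ring).
    unfold K in eK. nra.
Qed.

Section Main.
Variables (h D dD g : R -> R) (c : R) (z : R -> R).
Hypotheses (Hh : cont01 h) (Hg : cont01 g) (HD : C1_01 D dD)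
  (gpos : forall x, 0 < x <= 1 -> 0 < g x)
  (Hz : solves_Pc h D g c z) (D1 : D 1 = 0) (z1 : z 1 = 0).

Lemma lower_b lam : lam < 0 -> Pp h g dD c 1 lam > 0 ->
  exists d, 0 < d <= 1 /\ forall x, 1 - d < x < 1 -> D x / z x > lam.
Proof.
  intros Hl Hp.
  destruct HD as [HdD cdD].
  destruct Hz as [cz [dz [zneg z0]]].
  destruct (P_near1 h g dD c lam Hh Hg cdD Hl _ Hp) as [d [Hd Hn]].
  exists d. split. exact Hd. intros x1 Hx1.
  assert (B := barrier D dD z (fun x => h x - c - D x * g x / z x) 1 (- lam) x1
    ltac:(lra) HdD (deriv_cont _ _ HdD) cz D1 z1
    (fun x Hx => dz x ltac:(lra))).
  assert (zx1 := zneg x1 ltac:(lra)).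
  assert (B' : 1 * D x1 + - lam * z x1 < 0).
  { apply B. intros x Hx Hge.
    assert (zx := zneg x ltac:(lra)).
    assert (gx := gpos x ltac:(lra)).
    assert (Px := Hn x ltac:(lra)). apply Rabs_def2 in Px. unfold Pp in Px.
    set (w := D x / z x).
    assert (Dx : D x = w * z x) by (unfold w; field; lra).
    assert (E : D x * g x / z x = g x * w) by (unfold w; field; lra).
    rewrite E. rewrite Dx in Hge.
    assert (wl : w <= lam) by nra.
    assert (gl : g x * lam < 0) by nra.
    assert (g x * lam * (w - lam) >= 0) by nra.
    nra. }
  set (w1 := D x1 / z x1).
  assert (Dx : D x1 = w1 * z x1) by (unfold w1; field; lra).
  rewrite Dx in B'. nra.
Qed.

Lemma upper_b mu : mu < 0 -> Pp h g dD c 1 mu < 0 ->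
  exists d, 0 < d <= 1 /\ forall x, 1 - d < x < 1 -> D x / z x < mu.
Proof.
  intros Hl Hp.
  destruct HD as [HdD cdD].
  destruct Hz as [cz [dz [zneg z0]]].
  destruct (P_near1 h g dD c mu Hh Hg cdD Hl (- Pp h g dD c 1 mu) ltac:(lra)) as [d [Hd Hn]].
  exists d. split. exact Hd. intros x1 Hx1.
  assert (B := barrier D dD z (fun x => h x - c - D x * g x / z x) (-1) mu x1
    ltac:(lra) HdD (deriv_cont _ _ HdD) cz D1 z1
    (fun x Hx => dz x ltac:(lra))).
  assert (zx1 := zneg x1 ltac:(lra)).
  assert (B' : -1 * D x1 + mu * z x1 < 0).
  { apply B. intros x Hx Hge.
    assert (zx := zneg x ltac:(lra)).
    assert (gx := gpos x ltac:(lra)).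
    assert (Px := Hn x ltac:(lra)). apply Rabs_def2 in Px. unfold Pp in Px.
    set (w := D x / z x).
    assert (Dx : D x = w * z x) by (unfold w; field; lra).
    assert (E : D x * g x / z x = g x * w) by (unfold w; field; lra).
    rewrite E. rewrite Dx in Hge.
    assert (wl : w >= mu) by nra.
    assert (gl : g x * mu < 0) by nra.
    assert (g x * mu * (w - mu) <= 0) by nra.
    unfold Pp in *. nra. }
  set (w1 := D x1 / z x1).
  assert (Dx : D x1 = w1 * z x1) by (unfold w1; field; lra).
  rewrite Dx in B'. nra.
Qed.

End Main.

Section Main2.
Variables (h D dD g : R -> R) (c : R) (z : R -> R).
Hypotheses (Hh : cont01 h) (Hg : cont01 g) (HD : C1_01 D dD)
  (gpos : forall x, 0 < x <= 1 -> 0 < g x)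
  (Dpos : forall x, 0 < x < 1 -> 0 < D x)
  (Hz : solves_Pc h D g c z) (D1 : D 1 = 0) (z1 : z 1 = 0).

Lemma lim_T T : T <= 0 ->
  (forall e, e > 0 -> Pp h g dD c 1 (T - e) > 0) ->
  (T < 0 -> forall e, 0 < e < - T -> Pp h g dD c 1 (T + e) < 0) ->
  filterlim (fun x => D x / z x) (at_left 1) (locally T).
Proof.
  intros HT Hlow Hup. apply filterlim_locally. intros eps.
  pose proof (cond_pos eps) as ep.
  destruct (lower_b h D dD g c z Hh Hg HD gpos Hz D1 z1 (T - eps / 2) ltac:(lra)
     (Hlow (eps / 2) ltac:(lra))) as [d1 [Hd1 H1]].
  assert (U : exists d2, 0 < d2 <= 1 /\ forall x, 1 - d2 < x < 1 -> D x / z x < T + eps / 2).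
  { destruct (Rle_lt_or_eq_dec _ _ HT) as [Tn|T0].
    - set (e := Rmin (eps / 2) (- T / 2)).
      assert (m1 : e <= eps / 2) by apply Rmin_l.
      assert (m2 : e <= - T / 2) by apply Rmin_r.
      assert (ep2 : e > 0) by (apply Rmin_glb_lt; lra).
      destruct (upper_b h D dD g c z Hh Hg HD gpos Hz D1 z1 (T + e) ltac:(lra)
        (Hup Tn e ltac:(lra))) as [d2 [Hd2 H2]].
      exists d2. split. exact Hd2. intros x Hx. specialize (H2 x Hx). lra.
    - exists 1. split. lra. intros x Hx.
      destruct Hz as [_ [_ [zneg _]]].
      assert (zx := zneg x ltac:(lra)). assert (Dx := Dpos x ltac:(lra)).
      assert (D x / z x < 0).
      { assert (E : D x = (D x / z x) * z x) by (field; lra).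
        set (w := D x / z x) in *. nra. }
      lra. }
  destruct U as [d2 [Hd2 H2]].
  assert (dp : 0 < Rmin d1 d2) by (apply Rmin_glb_lt; lra).
  exists (mkposreal _ dp). intros y Hy Hlt.
  change (Rabs (y - 1) < Rmin d1 d2) in Hy.
  assert (m1 : Rmin d1 d2 <= d1) by apply Rmin_l.
  assert (m2 : Rmin d1 d2 <= d2) by apply Rmin_r.
  rewrite Rabs_left in Hy by lra.
  specialize (H1 y ltac:(lra)). specialize (H2 y ltac:(lra)).
  change (Rabs (D y / z y - T) < eps). apply Rabs_def1; lra.
Qed.
End Main2.

Theorem lemma9p1 (f h D dD g : R -> R) (c : R) (z : R -> R) :
  C1_01 f h -> f 0 = 0 ->
  C1_01 D dD -> (forall x, 0 < x < 1 -> 0 < D x) -> D 1 = 0 ->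
  cont01 g -> (forall x, 0 < x <= 1 -> 0 < g x) -> g 0 = 0 ->
  (exists M delta, 0 < delta /\
     forall x, 0 < x < delta -> D x * g x / x <= M) ->
  solves_Pc h D g c z -> z 1 = 0 ->
  (dD 1 < 0 ->
     filterlim (fun x => D x / z x) (at_left 1)
       (locally ((h 1 - c - sqrt ((h 1 - c) ^ 2 - 4 * dD 1 * g 1)) / (2 * g 1))))
  /\
  (dD 1 = 0 ->
     filterlim (fun x => D x / z x) (at_left 1)
       (locally (Rmin 0 ((h 1 - c) / g 1)))).
Proof.
  intros [_ Hh] _ HD Dpos D1 Hg gpos _ _ Hz z1.
  assert (g1 : 0 < g 1) by (apply gpos; lra).
  set (a := h 1 - c).
  split.
  - intros Hd.
    set (S := a ^ 2 - 4 * dD 1 * g 1).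
    assert (Sp : 0 <= S) by (unfold S; nra).
    set (r := sqrt S).
    assert (r2 : r * r = S) by (apply sqrt_sqrt; exact Sp).
    assert (r0 : 0 <= r) by apply sqrt_pos.
    assert (ra : a < r) by (unfold S in r2; nra).
    assert (ra' : - a < r) by (unfold S in r2; nra).
    set (T := (a - r) / (2 * g 1)).
    set (T2 := (a + r) / (2 * g 1)).
    assert (Tn : T < 0).
    { unfold T. apply Rdiv_neg_pos; lra. }
    assert (T2p : T2 > 0).
    { unfold T2. apply Rdiv_lt_0_compat; lra. }
    assert (Hd' : dD 1 = (a * a - r * r) / (4 * g 1)).
    { rewrite r2. unfold S. field. lra. }
    assert (Fac : forall t, Pp h g dD c 1 t = g 1 * (t - T) * (t - T2)).
    { intros t. unfold Pp. fold a. rewrite Hd'. unfold T, T2. field. lra. }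
    apply (lim_T h D dD g c z Hh Hg HD gpos Dpos Hz D1 z1 T).
    + lra.
    + intros e He. rewrite Fac.
      replace (g 1 * (T - e - T) * (T - e - T2)) with (g 1 * e * (e + T2 - T)) by ring.
      apply Rmult_lt_0_compat. apply Rmult_lt_0_compat; lra. lra.
    + intros _ e He. rewrite Fac.
      replace (g 1 * (T + e - T) * (T + e - T2)) with ((g 1 * e) * (T + e - T2)) by ring.
      assert (0 < g 1 * e) by (apply Rmult_lt_0_compat; lra). nra.
  - intros Hd. set (T := Rmin 0 (a / g 1)).
    assert (m1 : T <= 0) by apply Rmin_l.
    assert (m2 : T <= a / g 1) by apply Rmin_r.
    assert (m3 : g 1 * T <= a).
    { replace a with (g 1 * (a / g 1)) by (field; lra). apply Rmult_le_compat_l; lra. }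
    assert (Fac : forall t, Pp h g dD c 1 t = t * (g 1 * t - a)).
    { intros t. unfold Pp. fold a. rewrite Hd. ring. }
    apply (lim_T h D dD g c z Hh Hg HD gpos Dpos Hz D1 z1 T).
    + lra.
    + intros e He. rewrite Fac.
      assert (0 < g 1 * e) by (apply Rmult_lt_0_compat; lra).
      assert (A : T - e < 0) by lra.
      assert (B : g 1 * (T - e) - a < 0) by lra. nra.
    + intros Tn e He. rewrite Fac.
      assert (TE : T = a / g 1).
      { unfold T, Rmin. destruct Rle_dec; [ | lra]. unfold T in Tn.
        unfold Rmin in Tn. destruct Rle_dec; lra. }
      assert (g 1 * T = a) by (rewrite TE; field; lra).
      assert (0 < g 1 * e) by (apply Rmult_lt_0_compat; lra).
      assert (A : T + e < 0) by lra.
      assert (B : g 1 * (T + e) - a > 0) by lra. nra.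
Qed.
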